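(* Assume (A1)–(A3). If $m_2<0$, then for every $k\ge0$ there exist $C>0$, $\theta>0$ and $\tilde\theta>0$ such that for all $i\ge k_0$ and $j,\ell\in\mathbb Z$, \[\mathbb P_{(i,j)}\bigl(Y_1(T_1^k)=\ell\bigr)\le C\exp(-\theta(\ell-j)-\tilde\theta i),\] where $T_1^k=\inf\{n>0: X_1(n)\le\max(k_0-1,k)\}$.
   Context: Let $\mathbb N=\{0,1,2,\dots\}$ and fix an integer $k_0\ge1$. Let $\mu$, $\mu'_j$ ($0\le j<k_0$), $\mu''_i$ ($0\le i<k_0$), $\mu_{ij}$ ($0\le i,j<k_0$) be probability measures on $\mathbb Z^2$. The random walk $Z=(X(n),Y(n))$ on $\mathbb N^2$ has transition probabilities $p((i,j)\to(i',j'))$ equal to $\mu(i'-i,j'-j)$ if $i,j\ge k_0$; $\mu'_j(i'-i,j'-j)$ if $i\ge k_0$, $0\le j<k_0$; $\mu''_i(i'-i,j'-j)$ if $0\le i<k_0$, $j\ge k_0$; $\mu_{ij}(i'-i,j'-j)$ if $0\le i,j<k_0$. Assumptions: (A1) $\mu(a,b)=0$ if $a<-k_0$ or $b<-k_0$; $\mu'_j(a,b)=0$ if $a<-k_0$ or $b<-j$; $\mu''_i(a,b)=0$ if $b<-k_0$ or $a<-i$; $\mu_{ij}(a,b)=0$ if $a<-i$ or $b<-j$. (A2) There are $\delta,\gamma,C>0$ with $\sup_{(i,j)\in\mathbb N^2}\mathbb E_{(i,j)}[\exp(\delta(X(1)-i)+\gamma(Y(1)-j))]\le C$. (A3) $Z_0,Z_1,Z_2,Z$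 are irreducible on their state spaces. $Z_0$: random walk on $\mathbb Z^2$ with increment law $\mu$; $m_2=\sum b\mu(a,b)$. $Z_1=(X_1,Y_1)$: Markov chain on $\mathbb N\times\mathbb Z$ with transitions $\mu(i'-i,j'-j)$ from $(i,j)$ if $i\ge k_0$ and $\mu''_i(i'-i,j'-j)$ if $0\le i<k_0$; $\mathbb P_{(i,j)}$ is its law from $(i,j)$. $Z_2$: Markov chain on $\mathbb Z\times\mathbb N$ with transitions $\mu$ if $j\ge k_0$ and $\mu'_j$ if $0\le j<k_0$. *)

(* Defs.v *)
From HB Require Import structures.
From mathcomp Require Import all_boot all_order all_algebra.
From mathcomp Require Import all_classical all_reals.
From mathcomp Require Import all_analysis.
From Stdlib Require Import Relations.
Set Implicit Arguments. Unset Strict Implicit. Unset Printing Implicit Defensive.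
Import Order.TTheory GRing.Theory Num.Theory.
Local Open Scope ring_scope.
Local Open Scope classical_set_scope.

Section Defs.
Variable R : realType.

Definition is_prob (m : int * int -> R) : Prop :=
  (forall x, 0 <= m x) /\ (\esum_(x in [set: int * int]) (m x)%:E = 1%E).

(* second coordinate of the mean: m_2 = sum b mu(a,b)
   (integral = integral of positive part minus integral of negative part) *)
Definition mean2 (mu : int * int -> R) : \bar R :=
  (\esum_(x in [set: int * int]) ((Num.max x.2 0)%:~R * mu x)%:E
   - \esum_(x in [set: int * int]) ((Num.max (- x.2) 0)%:~R * mu x)%:E)%E.

Definition kerZ0 (mu : int * int -> R) (z z' : int * int) : R :=
  mu (z'.1 - z.1, z'.2 - z.2).

Definition kerZ1 (k0 : nat) (mu : int * int -> R) (mu2 : nat -> int * int -> R)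
  (z z' : nat * int) : R :=
  let d := (z'.1%:Z - z.1%:Z, z'.2 - z.2) in
  if (k0 <= z.1)%N then mu d else mu2 z.1 d.

Definition kerZ2 (k0 : nat) (mu : int * int -> R) (mu1 : nat -> int * int -> R)
  (z z' : int * nat) : R :=
  let d := (z'.1 - z.1, z'.2%:Z - z.2%:Z) in
  if (k0 <= z.2)%N then mu d else mu1 z.2 d.

(* Z on N x N; mu1 j = mu'_j, mu2 i = mu''_i, mu12 i j = mu_{ij} *)
Definition kerZ (k0 : nat) (mu : int * int -> R) (mu1 mu2 : nat -> int * int -> R)
  (mu12 : nat -> nat -> int * int -> R) (z z' : nat * nat) : R :=
  let d := (z'.1%:Z - z.1%:Z, z'.2%:Z - z.2%:Z) in
  if (k0 <= z.1)%N then
    (if (k0 <= z.2)%N then mu d else mu1 z.2 d)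
  else
    (if (k0 <= z.2)%N then mu2 z.1 d else mu12 z.1 z.2 d).

Definition irreducible (S : Type) (p : S -> S -> R) : Prop :=
  forall x y : S, clos_refl_trans_1n S (fun a b => 0 < p a b) x y.

(* First-passage decomposition for Z_1 and the set {X_1 <= K}:
   firstpass p K l n z = P_z(T = n+1, Y_1(T) = l) where T = inf{n > 0 : X_1(n) <= K},
   computed as a sum over paths. *)
Fixpoint firstpass (p : nat * int -> nat * int -> R) (K : nat) (l : int) (n : nat)
  (z : nat * int) : \bar R :=
  match n with
  | 0 => \esum_(z' in [set z' : nat * int | (z'.1 <= K)%N /\ z'.2 = l]) (p z z')%:E
  | n'.+1 => \esum_(z' in [set z' : nat * int | (K < z'.1)%N])
               ((p z z')%:E * firstpass p K l n' z')%E
  end.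

Definition hitY (p : nat * int -> nat * int -> R) (K : nat) (l : int) (z : nat * int)
  : \bar R :=
  \esum_(n in [set: nat]) firstpass p K l n z.

End Defs.

(* Main.v *)
Require Import Defs.
From HB Require Import structures.
From mathcomp Require Import all_boot all_order all_algebra.
From mathcomp Require Import all_classical all_reals.
From mathcomp Require Import all_analysis.
Import Order.TTheory GRing.Theory Num.Theory.
Local Open Scope ring_scope.
Local Open Scope classical_set_scope.
From mathcomp Require Import lra ring zify.
Lemma expR_taylor (R : realType) (x : R) : expR x <= 1 + x + x^+2 * expR `|x|.
Proof.
have h1 := expR_ge1Dx (- x).
have e0 := expR_gt0 x.
have eN : expR x * expR (- x) = 1 by rewrite -expRD subrr expR0.
have ea : 1 <= expR `|x| by have := expR_ge1Dx `|x|; have := normr_ge0 x; lra.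
case: (lerP 0 x) => hx.
  rewrite ger0_norm //.
  case: (lerP 1 x) => h1x.
    have : 1 <= x ^+ 2 by nra.
    move=> hx2; have := ler_wpM2r (ltW e0) hx2; rewrite mul1r; lra.
  have h2 : (1 - x) * expR x <= 1.
    have := ler_wpM2r (ltW e0) h1; rewrite [expR (- x) * _]mulrC eN; lra.
  nra.
rewrite ltr0_norm // in ea *.
have : expR x <= 1 + x + x ^+ 2.
  have h3 : (1 - x) * expR x <= 1.
    have := ler_wpM2r (ltW e0) h1; rewrite [expR (- x) * _]mulrC eN; lra.
  have hx3 : x * x ^+ 2 <= 0 by rewrite nmulr_rle0 // sqr_ge0.
  rewrite leNgt; apply/negP => hc.
  have : 0 < (1 - x) * (expR x - (1 + x + x ^+ 2)) by apply: mulr_gt0; lra.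
  nra.
have : x ^+ 2 <= x ^+ 2 * expR (- x).
  have := ler_wpM2l (sqr_ge0 x) (ea); rewrite mulr1; lra.
lra.
Qed.
Lemma sq_le_expR (R : realType) (y : R) : 0 <= y -> y ^+ 2 <= 4 * expR y.
Proof.
move=> hy.
have h := expR_ge1Dx (y / 2).
have e : expR y = expR (y/2) * expR (y/2) by rewrite -expRD; congr expR; rewrite -splitr.
nra.
Qed.

Section EsumExtra.
Local Open Scope ereal_scope.
Variables (R : realType) (T : choiceType).

Lemma esumZ (S : set T) (r : R) (f : T -> \bar R) : (0 <= r)%R ->
  (forall x, 0 <= f x) ->
  \esum_(i in S) (r%:E * f i) = r%:E * \esum_(i in S) f i.
Proof.
move=> r0 f0; rewrite /esum -ereal_supZl //; last first.
  by apply/set0P; exists 0; exists set0; [exact: fsets_set0|rewrite fsbig_set0].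
congr ereal_sup; apply/seteqP; split => x /=.
- move=> [A hA <-]; exists (\sum_(i \in A) f i); first by exists A.
  by rewrite ge0_mule_fsumr.
- move=> [y [A hA <-] <-]; exists A => //; by rewrite ge0_mule_fsumr.
Qed.

Lemma esum_supp (A : set T) (f : T -> \bar R) :
  (forall x, ~ A x -> f x = 0) ->
  \esum_(i in [set: T]) f i = \esum_(i in A) f i.
Proof.
move=> h; rewrite [RHS]esum_mkcond; apply: eq_esum => x _.
case: ifPn => // /negP xA; rewrite h //; move=> Ax; apply: xA; by rewrite inE.
Qed.

Lemma esum_sub (A : set T) (f : T -> \bar R) : (forall x, 0 <= f x) ->
  \esum_(i in A) f i <= \esum_(i in [set: T]) f i.
Proof.
move=> f0; rewrite esum_mkcond; apply: le_esum => x _; by case: ifP.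
Qed.

End EsumExtra.

Lemma pt_bound (R : realType) (dl gm t k u v : R) : 0 < dl -> 0 < gm -> 0 <= t ->
  t <= gm / 2 -> 0 <= k -> - k <= u -> - k <= v ->
  expR (t * v) <= 1 + t * v +
    t ^+ 2 * (16 / gm ^+ 2 * expR (2 * gm * k + dl * k)) * expR (dl * u + gm * v).
Proof.
move=> hd hg ht htg hk hu hv.
have tay := expR_taylor _ (t * v).
have hw : `|t * v| = t * `|v| by rewrite normrM ger0_norm.
rewrite hw in tay.
set w := `|v| in tay *.
have w0 : 0 <= w by rewrite normr_ge0.
have wv : w ^+ 2 = v ^+ 2 by rewrite /w real_normK // num_real.
have wle : w <= v + 2 * k.
  rewrite /w; case: (lerP 0 v) => h; [rewrite ger0_norm //; lra | rewrite ltr0_norm //; lra].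
set E1 := expR (t * w). set E2 := expR (gm / 2 * w).
set E3 := expR (dl * u + gm * v). set E4 := expR (2 * gm * k + dl * k).
have e1 : E1 <= E2 by rewrite /E1 /E2 ler_expR; nra.
have e2 : (gm / 2 * w) ^+ 2 <= 4 * E2 by apply: sq_le_expR; nra.
have e3 : E2 * E2 <= E3 * E4.
  rewrite /E2 /E3 /E4 -!expRD ler_expR.
  have : gm / 2 * w + gm / 2 * w = gm * w by rewrite -mulrDl -splitr.
  move=> ->; nra.
have E2p : 0 < E2 by apply: expR_gt0.
have vE : v ^+ 2 <= 16 / gm ^+ 2 * E2.
  rewrite -wv; have gp : 0 < gm ^+ 2 by apply: exprn_gt0.
  rewrite mulrAC ler_pdivlMr //.
  have ga : gm = 2 * (gm / 2) by rewrite mulrC -mulrA mulVf ?mulr1 // pnatr_eq0.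
  move: e2; set a := gm / 2; rewrite ga => e2; rewrite !exprMn in e2 *; have -> : (2:R) ^+ 2 = 4 by rewrite expr2 -natrM. nra.
have t2 : 0 <= t ^+ 2 by apply: sqr_ge0.
have : v ^+ 2 * E1 <= 16 / gm ^+ 2 * E3 * E4.
  have E1p : 0 <= E1 by apply: ltW; apply: expR_gt0.
  have c0 : 0 <= 16 / gm ^+ 2 by apply: divr_ge0 => //; apply: sqr_ge0.
  have s1 : v ^+ 2 * E1 <= v ^+ 2 * E2 by apply: ler_wpM2l => //; apply: sqr_ge0.
  have s2 : v ^+ 2 * E2 <= 16 / gm ^+ 2 * E2 * E2 by apply: ler_wpM2r => //; apply: ltW.
  have s3 : 16 / gm ^+ 2 * (E2 * E2) <= 16 / gm ^+ 2 * (E3 * E4) by apply: ler_wpM2l.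
  rewrite !mulrA in s3; lra.
move=> key.
have eq1 : t ^+ 2 * (16 / gm ^+ 2 * E4) * E3 = t ^+ 2 * (16 / gm ^+ 2 * E3 * E4) by ring.
have eq2 : (t * v) ^+ 2 * E1 = t ^+ 2 * (v ^+ 2 * E1) by ring.
have := ler_wpM2l t2 key.
rewrite -eq1 -eq2 => hh. move: tay; rewrite -/E1 => tay. lra.
Qed.

Lemma max_decomp (R : realType) (v : int) :
  (v%:~R : R) = (Num.max v 0)%:~R - (Num.max (- v) 0)%:~R.
Proof.
have e : v = Num.max v 0 - Num.max (- v) 0.
  rewrite /Order.max; case: ifP => h1; case: ifP => h2; lia.
by rewrite {1}e intrB.
Qed.

Lemma natz_R (R : realType) (n : nat) : ((n%:Z)%:~R : R) = n%:R.
Proof. by rewrite pmulrn. Qed.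

Lemma max_ge0R (R : realType) (v : int) : (0 : R) <= (Num.max v 0)%:~R.
Proof. rewrite ler0z /Order.max; case: ifP => h; lia. Qed.

Ltac nn := move=> ? _; rewrite -?EFinM -?EFinD lee_fin;
  repeat (first [apply: addr_ge0 | apply: mulr_ge0 | apply: sqr_ge0 |
                 apply: max_ge0R | (rewrite invr_ge0) | (apply: ltW; apply: expR_gt0) | (apply: ltW; done) | done]).

Section Main.
Variables (R : realType) (k0 : nat) (mu : int * int -> R).
Hypothesis k0p : (0 < k0)%N.
Hypothesis mu0 : forall d, 0 <= mu d.
Hypothesis mu1 : (\esum_(x in [set: int * int]) (mu x)%:E = 1)%E.
Hypothesis supp : forall a b : int, (a < - k0%:Z \/ b < - k0%:Z) -> mu (a, b) = 0.
Variables (dl gm Cm : R).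
Hypothesis dl0 : 0 < dl.
Hypothesis gm0 : 0 < gm.
Hypothesis Cm0 : 0 < Cm.
Hypothesis mom : (\esum_(d in [set: int * int])
   (mu d * expR (dl * d.1%:~R + gm * d.2%:~R))%:E <= Cm%:E)%E.
Hypothesis neg : (mean2 mu < 0)%E.

Lemma supp_R d : mu d = 0 \/
  (- (k0%:R) <= (d.1%:~R : R) /\ - (k0%:R) <= (d.2%:~R : R)).
Proof.
case: d => a b /=.
case: (ltP a (- k0%:Z)) => ha; first by left; apply: supp; left.
case: (ltP b (- k0%:Z)) => hb; first by left; apply: supp; right.
by right; split; rewrite -(natz_R R) -intrN ler_int.
Qed.

Lemma drift1 : exists t c : R, 0 < t /\ 0 < c /\
  (\esum_(d in [set: int * int]) (mu d * expR (t * d.2%:~R))%:E <= (1 - c)%:E)%E.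
Proof.
move: neg; rewrite /mean2.
set mp := esum _ (fun x => ((Num.max x.2 0)%:~R * mu x)%:E).
set mn := esum _ (fun x => ((Num.max (- x.2) 0)%:~R * mu x)%:E).
have mp0 : (0 <= mp)%E by apply: esum_ge0 => x _; rewrite lee_fin mulr_ge0 // max_ge0R.
have mn0 : (0 <= mn)%E by apply: esum_ge0 => x _; rewrite lee_fin mulr_ge0 // max_ge0R.
have mnle : (mn <= (k0%:R : R)%:E)%E.
  rewrite -[X in (_ <= X)%E]mule1 -mu1 -esumZ; [|by rewrite ler0n|by move=> x; rewrite lee_fin].
  apply: le_esum => d _; rewrite -EFinM lee_fin.
  case: (supp_R d) => [->|[_ h2]]; first by rewrite !mulr0.
  apply: ler_wpM2r => //.
  rewrite /Order.max; case: ifP => _; first by rewrite ler0n.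
  by rewrite intrN; lra.
have mnfin : mn = (fine mn)%:E.
  by rewrite fineK // ge0_fin_numE // (le_lt_trans mnle) // ltry.
set mnr := fine mn in mnfin.
rewrite mnfin suber_lt0 // => hlt.
have mpfin : mp = (fine mp)%:E.
  by rewrite fineK // ge0_fin_numE // (lt_trans hlt) // ltry.
set mpr := fine mp in mpfin.
rewrite mpfin lte_fin in hlt.
have mpr0 : 0 <= mpr by rewrite -lee_fin -mpfin.
set gap := mnr - mpr.
have gap0 : 0 < gap by rewrite /gap subr_gt0.
set k : R := k0%:R.
have k0R : 0 <= k by rewrite /k ler0n.
set K1 := 16 / gm ^+ 2 * expR (2 * gm * k + dl * k).
have K10 : 0 < K1 by rewrite /K1 mulr_gt0 ?expR_gt0 // divr_gt0 // exprn_gt0.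
set t := Num.min (gm / 2) (gap / (2 * (K1 * Cm))).
have KC0 : 0 < K1 * Cm by rewrite mulr_gt0.
have t0 : 0 < t by rewrite /t lt_min divr_gt0 //= divr_gt0 // mulr_gt0.
have tg : t <= gm / 2 by rewrite /t ge_min lexx.
have tb : t * (K1 * Cm) <= gap / 2.
  have : t <= gap / (2 * (K1 * Cm)) by rewrite /t ge_min lexx orbT.
  move=> h; rewrite ler_pdivlMr in h; last by rewrite mulr_gt0.
  have e : t * (2 * (K1 * Cm)) = 2 * (t * (K1 * Cm)) by ring.
  rewrite e in h; lra.
exists t, (t * gap / 2); split => //; split; first by rewrite divr_gt0 // mulr_gt0.
have pw : forall d, ((mu d * expR (t * d.2%:~R))%:E
    + t%:E * ((Num.max (- d.2) 0)%:~R * mu d)%:E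
  <= ((mu d)%:E + t%:E * ((Num.max d.2 0)%:~R * mu d)%:E)
    + (t ^+ 2 * K1)%:E * (mu d * expR (dl * d.1%:~R + gm * d.2%:~R))%:E)%E.
  move=> d; rewrite -!EFinM -!EFinD lee_fin.
  case: (supp_R d) => [->|[h1 h2]]; first by rewrite !(mulr0, mul0r, addr0).
  have H := pt_bound R dl gm t k _ _ dl0 gm0 (ltW t0) tg k0R h1 h2.
  rewrite -/K1 in H.
  have hv := max_decomp R d.2.
  move: H hv.
  set v := (d.2%:~R : R). set vp := ((Num.max d.2 0)%:~R : R).
  set vn := ((Num.max (- d.2) 0)%:~R : R).
  set E := expR (dl * d.1%:~R + gm * v). set e := expR (t * v).
  move=> H hv.
  have H' : e <= 1 + t * (vp - vn) + t ^+ 2 * K1 * E by rewrite -hv.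
  have := ler_wpM2l (mu0 d) H'.
  have -> : mu d * (1 + t * (vp - vn) + t ^+ 2 * K1 * E) =
    mu d + t * (vp * mu d) - t * (vn * mu d) + t ^+ 2 * K1 * (mu d * E) by ring.
  rewrite [mu d * e]mulrC; lra.
have S : (\esum_(d in [set: int * int]) ((mu d * expR (t * d.2%:~R))%:E
    + t%:E * ((Num.max (- d.2) 0)%:~R * mu d)%:E)
  <= \esum_(d in [set: int * int]) (((mu d)%:E + t%:E * ((Num.max d.2 0)%:~R * mu d)%:E)
    + (t ^+ 2 * K1)%:E * (mu d * expR (dl * d.1%:~R + gm * d.2%:~R))%:E))%E.
  by apply: le_esum => d _; exact: pw.
have g0 : forall x : R, 0 <= x -> (0 <= x%:E)%E by move=> x; rewrite lee_fin.
have mg0 : forall d, (0 <= ((Num.max d.2 0)%:~R * mu d))%R by move=> d; rewrite mulr_ge0 // max_ge0R.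
have mg0' : forall d, (0 <= ((Num.max (- d.2) 0)%:~R * mu d))%R by move=> d; rewrite mulr_ge0 // max_ge0R.
have eg0 : forall d, (0 <= (mu d * expR (dl * d.1%:~R + gm * d.2%:~R)))%R by move=> d; rewrite mulr_ge0 // ltW // expR_gt0.
have tK0 : 0 <= t ^+ 2 * K1 by rewrite mulr_ge0 ?sqr_ge0 // ltW.
rewrite esumD in S; [|nn|nn].
rewrite esumD in S; [|nn|nn].
rewrite esumD in S; [|nn|nn].
rewrite !esumZ in S; try exact: tK0; try (by rewrite ltW); try (by move=> x; apply: g0).
rewrite -/mp -/mn mu1 mpfin mnfin in S.
rewrite -!EFinM in S.
set E1 := esum _ _ in S *.
set M := esum _ _ in S.
have hM : ((t ^+ 2 * K1)%:E * M <= (t ^+ 2 * K1 * Cm)%:E)%E.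
  by rewrite (EFinM (t ^+ 2 * K1) Cm); apply: lee_wpmul2l => //; rewrite lee_fin; exact: tK0.
have S' := le_trans S (leeD2l _ hM).
rewrite -!EFinD in S'.
have mnr0 : 0 <= mnr by rewrite -lee_fin -mnfin.
have E10 : (0 <= E1)%E by apply: esum_ge0 => d _; rewrite lee_fin mulr_ge0 // ltW // expR_gt0.
have lt1 : (E1 < +oo)%E.
  apply: (le_lt_trans (y := (1 + t * mpr + t ^+ 2 * K1 * Cm)%:E)); last exact: ltry.
  apply: le_trans S'; rewrite leeDl // lee_fin; apply: mulr_ge0 => //; exact: ltW.
have Efin : E1 = (fine E1)%:E.
  have h : E1 \is a fin_num by rewrite (ge0_fin_numE E10).
  by rewrite (fineK h).
rewrite Efin -EFinD lee_fin in S'; rewrite Efin lee_fin.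
have := ler_wpM2l (ltW t0) tb.
have -> : t * (t * (K1 * Cm)) = t ^+ 2 * K1 * Cm by ring.
have -> : t * (gap / 2) = t * gap / 2 by ring.
rewrite /gap in S' *; lra.
Qed.

Lemma drift2 : exists th et : R, 0 < th /\ 0 < et /\
  (\esum_(d in [set: int * int])
     (mu d * expR (th * d.2%:~R - et * d.1%:~R))%:E <= 1)%E.
Proof.
have [t [c [t0 [c0 H]]]] := drift1.
have kp : 0 < (k0%:R : R) by rewrite ltr0n.
exists t, (c / k0%:R); split => //; split; first by rewrite divr_gt0.
apply: (le_trans (y := ((expR c)%:E * \esum_(d in [set: int * int]) (mu d * expR (t * d.2%:~R))%:E)%E)).
  rewrite -esumZ; last 2 first.
  - exact/ltW/expR_gt0.
  - by move=> d; rewrite lee_fin mulr_ge0 // ltW // expR_gt0.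
  apply: le_esum => d _; rewrite -EFinM lee_fin.
  case: (supp_R d) => [->|[h1 h2]]; first by rewrite !(mulr0, mul0r).
  rewrite mulrCA; apply: ler_wpM2l => //.
  rewrite expRD mulrC; apply: ler_wpM2r; first exact/ltW/expR_gt0.
  rewrite ler_expR.
  have : c / k0%:R * d.1%:~R >= c / k0%:R * (- k0%:R) by apply: ler_wpM2l => //; rewrite ltW // divr_gt0.
  have -> : c / k0%:R * (- k0%:R) = - c by rewrite mulrN -mulrA mulVf ?mulr1 // gt_eqF.
  lra.
apply: (le_trans (y := ((expR c)%:E * (1 - c)%:E)%E)).
  by apply: lee_wpmul2l => //; rewrite lee_fin ltW // expR_gt0.
rewrite -EFinM lee_fin.
have h1 := expR_ge1Dx (- c).
have eN : expR c * expR (- c) = 1 by rewrite -expRD subrr expR0.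
have := ler_wpM2l (ltW (expR_gt0 c)) h1; rewrite eN; lra.
Qed.

End Main.

Section Chain.
Variables (R : realType) (k0 : nat) (mu : int * int -> R) (mu2 : nat -> int * int -> R).
Hypothesis mu0 : forall d, 0 <= mu d.
Hypothesis mu20 : forall i, (i < k0)%N -> forall d, 0 <= mu2 i d.
Variables (th et : R).
Hypothesis th0 : 0 < th.
Hypothesis et0 : 0 < et.
Hypothesis Hd : (\esum_(d in [set: int * int])
     (mu d * expR (th * d.2%:~R - et * d.1%:~R))%:E <= 1)%E.
Variables (K : nat) (l : int).
Hypothesis HK : (k0.-1 <= K)%N.

Let p := kerZ1 k0 mu mu2.

Lemma p_ge0 z z' : 0 <= p z z'.
Proof.
rewrite /p /kerZ1; case: ifP => h //.
by apply: mu20; rewrite ltnNge h.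
Qed.

Definition Gf (z : nat * int) : R :=
  expR (th * (z.2%:~R - l%:~R) - et * (z.1%:R - K%:R)).

Lemma Gf_gt0 z : 0 < Gf z. Proof. exact: expR_gt0. Qed.

Lemma super z : (k0 <= z.1)%N ->
  (\esum_(z' in [set: nat * int]) (p z z' * Gf z')%:E <= (Gf z)%:E)%E.
Proof.
move=> hz.
pose e (z' : nat * int) : int * int := (z'.1%:Z - z.1%:Z, z'.2 - z.2).
pose h (d : int * int) : R := mu d * expR (th * d.2%:~R - et * d.1%:~R).
have eq : forall z', p z z' * Gf z' = Gf z * h (e z').
  move=> z'; rewrite /p /kerZ1 ifT // /h /e /= /Gf.
  rewrite mulrCA; congr (_ * _); rewrite -expRD; congr expR.
  rewrite !intrB !natz_R; ring.
under eq_esum do rewrite eq EFinM.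
rewrite esumZ; last 2 first.
- exact/ltW/Gf_gt0.
- by move=> x; rewrite lee_fin /h mulr_ge0 // ltW // expR_gt0.
rewrite -[X in (_ <= X)%E]mule1.
apply: lee_wpmul2l; first by rewrite lee_fin ltW // Gf_gt0.
rewrite -(esum_image _ e (fun d => (h d)%:E)); last first.
  move=> [a b] [a' b'] _ _ [] /= h1 h2.
  have ea : a = a' by apply/eqP; rewrite -eqz_nat; apply/eqP; lia.
  by rewrite ea; congr pair; lia.
apply: le_trans _ Hd; apply: esum_sub.
by move=> x; rewrite lee_fin /h mulr_ge0 // ltW // expR_gt0.
Qed.

Lemma fp_ge0 n z : (0 <= firstpass p K l n z)%E.
Proof.
elim: n z => [|n IH] z /=.
  by apply: esum_ge0 => z' _; rewrite lee_fin p_ge0.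
apply: esum_ge0 => z' _; apply: mule_ge0 => //; by rewrite lee_fin p_ge0.
Qed.

Lemma claim N z : (k0 <= z.1)%N ->
  (\sum_(0 <= n < N) firstpass p K l n z <= (Gf z)%:E)%E.
Proof.
elim: N z => [|N IH] z hz.
  by rewrite big_geq // lee_fin ltW // Gf_gt0.
rewrite big_nat_recl //=.
rewrite -esum_sum; last by move=> z' j _ _; apply: mule_ge0; [rewrite lee_fin p_ge0|exact: fp_ge0].
set A := [set z' : nat * int | (z'.1 <= K)%N /\ z'.2 = l].
set B := [set z' : nat * int | (K < z'.1)%N].
have s1 : (\esum_(z' in A) (p z z')%:E <= \esum_(z' in A) (p z z' * Gf z')%:E)%E.
  apply: le_esum => z' [h1 h2]; rewrite lee_fin.
  rewrite -[X in X <= _]mulr1; apply: ler_wpM2l; first exact: p_ge0.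
  rewrite /Gf h2 subrr mulr0 sub0r.
  have hx : 0 <= - (et * (z'.1%:R - K%:R)) by rewrite oppr_ge0 pmulr_rle0 // subr_le0 ler_nat.
  have := expR_ge1Dx (- (et * (z'.1%:R - K%:R))); lra.
have s2 : (\esum_(z' in B) \sum_(0 <= j < N) ((p z z')%:E * firstpass p K l j z')
   <= \esum_(z' in B) (p z z' * Gf z')%:E)%E.
  apply: le_esum => z' hB.
  rewrite -ge0_sume_distrr; last by move=> j _; exact: fp_ge0.
  rewrite EFinM; apply: lee_wpmul2l; first by rewrite lee_fin p_ge0.
  apply: IH; rewrite /B /= in hB.
  move: HK hB; case: k0 => [|k] //= ; lia.
apply: le_trans (leeD s1 s2) _.
apply: le_trans _ (super z hz).
rewrite [X in (X + _)%E]esum_mkcond [X in (_ + X)%E]esum_mkcond -esumD; last 2 first.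
- by move=> x _; case: ifP => // _; rewrite lee_fin mulr_ge0 ?p_ge0 // ltW // Gf_gt0.
- by move=> x _; case: ifP => // _; rewrite lee_fin mulr_ge0 ?p_ge0 // ltW // Gf_gt0.
apply: le_esum => x _.
have f0 : (0 <= (p z x * Gf x)%:E)%E by rewrite lee_fin mulr_ge0 ?p_ge0 // ltW // Gf_gt0.
case: ifP => hA; case: ifP => hB; rewrite ?adde0 ?add0e //.
move: hA hB; rewrite !inE /A /B /= => -[h1 _] h2; lia.
Qed.

Lemma hit_bound z : (k0 <= z.1)%N -> (hitY p K l z <= (Gf z)%:E)%E.
Proof.
move=> hz; rewrite /hitY -nneseries_esumT; last by move=> n; exact: fp_ge0.
apply: lime_le; first by apply: is_cvg_nneseries => n _ _; exact: fp_ge0.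
by apply: nearW => N; exact: claim.
Qed.

End Chain.

Theorem lemma5p6 (R : realType) (k0 : nat) (mu : int * int -> R)
  (mu1 mu2 : nat -> int * int -> R) (mu12 : nat -> nat -> int * int -> R) :
  (0 < k0)%N ->
  is_prob mu ->
  (forall j, (j < k0)%N -> is_prob (mu1 j)) ->
  (forall i, (i < k0)%N -> is_prob (mu2 i)) ->
  (forall i j, (i < k0)%N -> (j < k0)%N -> is_prob (mu12 i j)) ->
  (* (A1) *)
  (forall a b : int, (a < - k0%:Z \/ b < - k0%:Z) -> mu (a, b) = 0) ->
  (forall (j : nat) (a b : int), (j < k0)%N ->
     (a < - k0%:Z \/ b < - j%:Z) -> mu1 j (a, b) = 0) ->
  (forall (i : nat) (a b : int), (i < k0)%N ->
     (b < - k0%:Z \/ a < - i%:Z) -> mu2 i (a, b) = 0) ->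
  (forall (i j : nat) (a b : int), (i < k0)%N -> (j < k0)%N ->
     (a < - i%:Z \/ b < - j%:Z) -> mu12 i j (a, b) = 0) ->
  (* (A2) *)
  (exists (delta gamma C : R), 0 < delta /\ 0 < gamma /\ 0 < C /\
     forall z : nat * nat,
       (\esum_(z' in [set: nat * nat])
          (kerZ k0 mu mu1 mu2 mu12 z z' *
           expR (delta * (z'.1%:R - z.1%:R) + gamma * (z'.2%:R - z.2%:R)))%:E
        <= C%:E)%E) ->
  (* (A3) *)
  irreducible (kerZ0 mu) ->
  irreducible (kerZ1 k0 mu mu2) ->
  irreducible (kerZ2 k0 mu mu1) ->
  irreducible (kerZ k0 mu mu1 mu2 mu12) ->
  (* m_2 < 0 *)
  (mean2 mu < 0)%E ->
  forall k : nat,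
  exists (C theta theta' : R), 0 < C /\ 0 < theta /\ 0 < theta' /\
    forall (i : nat) (j l : int), (k0 <= i)%N ->
      (hitY (kerZ1 k0 mu mu2) (maxn k0.-1 k) l (i, j)
       <= (C * expR (- theta * (l - j)%:~R - theta' * i%:R))%:E)%E.
Proof.
move=> k0p [mu0 musum] _ P2 _ supp _ _ _ [dl [gm [Cm [dl0 [gm0 [Cm0 HA2]]]]]] _ _ _ _ neg k.
have mu20 : forall i, (i < k0)%N -> forall d, 0 <= mu2 i d.
  by move=> i hi d; have [h _] := P2 i hi; exact: h.
pose e (z' : nat * nat) : int * int := (z'.1%:Z - k0%:Z, z'.2%:Z - k0%:Z).
have mom : (\esum_(d in [set: int * int])
   (mu d * expR (dl * d.1%:~R + gm * d.2%:~R))%:E <= Cm%:E)%E.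
  rewrite (@esum_supp _ _ (e @` [set: nat * nat])); last first.
    move=> [a b] hn /=; suff -> : mu (a, b) = 0 by rewrite mul0r.
    apply: supp.
    case: (ltP a (- k0%:Z)) => ha; first by left.
    case: (ltP b (- k0%:Z)) => hb; first by right.
    exfalso; apply: hn; exists (absz (a + k0%:Z), absz (b + k0%:Z)) => //.
    rewrite /e /=; congr pair; lia.
  rewrite esum_image; last first.
    move=> [a b] [a' b'] _ _ [] /= h1 h2; congr pair; lia.
  apply: le_trans (HA2 (k0, k0)).
  apply: le_esum => z' _; rewrite lee_fin /kerZ /= leqnn /e /=.
  by rewrite !intrB !natz_R.
have [th [et [th0 [et0 Hd]]]] := drift2 R k0 mu k0p mu0 musum supp dl gm Cm dl0 gm0 Cm0 mom neg.
set K := maxn k0.-1 k.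
have HK : (k0.-1 <= K)%N by rewrite leq_maxl.
exists (expR (et * K%:R)), th, et; split; first exact: expR_gt0.
split => //; split => // i j l hi.
apply: le_trans (hit_bound R k0 mu mu2 mu0 mu20 th et th0 et0 Hd K l HK (i, j) hi) _.
rewrite lee_fin /Gf /= -expRD intrB.
rewrite ler_expR.
have -> : th * (j%:~R - l%:~R) - et * (i%:R - K%:R) =
  et * K%:R + (- th * (l%:~R - j%:~R) - et * i%:R) by ring.
by [].
Qed.
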